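(* (i) Let $\mathcal A$ be a finite set of matrices in $GL_2(\mathbb R)$ and let $\Phi$ be the IFS induced by $\mathcal A$ on $\mathbb{RP}^1$. If $\Phi$ satisfies the strong exponential separation condition on a nonempty set, then $\mathcal A$ is strongly Diophantine. (ii) Let $\mathcal A$ be a finite set of matrices in $SL_2(\mathbb R)$ and let $\Phi$ be the IFS induced by $\mathcal A$ on $\mathbb{RP}^1$. Then $\Phi$ satisfies the strong exponential separation condition on some set containing at least three points if and only if $\mathcal A$ is strongly Diophantine.
   Context: $\mathbb{RP}^1$ is identified with $\mathbb R/\pi\mathbb Z$ with its induced metric $d_{\mathbb P}$; $\varphi_A$ is the induced action of $A$. Write $\mathcal A=\{A_i\}_{i\in\Lambda}$, $A_{\mathbf i}=A_{i_1}\cdots A_{i_n}$, $\varphi_{\mathbf i}=\varphi_{A_{i_1}}\circ\cdots\circ\varphi_{A_{i_n}}$. $\Phi$ satisfies the strong exponential separation condition on $J$ if $\varphi_{\mathbf i}\equiv\varphi_{\mathbf j}$ only when $\mathbf i=\mathbf j$, and there is $c>0$ such that for all $n$ and $\mathbf i,\mathbf j\in\Lambda^n$ with $i_1\ne j_1$, $\sup_{x\in J}d_{\mathbb P}(\varphi_{\mathbf i}(x),\varphi_{\mathbf j}(x))>c^n$. $\mathcal A$ is strongly Diophantine if there is $c>0$ such that $\|A_{\mathbf i}-A_{\mathbf j}\|>c^n$ (operator norm) for all $n$ and $\mathbf i\ne\mathbf j\in\Lambda^n$. *)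

(* Defs.v *)
From HB Require Import structures.
From mathcomp Require Import all_boot all_order all_algebra.
From mathcomp Require Import all_classical all_reals all_analysis.
Set Implicit Arguments. Unset Strict Implicit. Unset Printing Implicit Defensive.
Import Order.TTheory GRing.Theory Num.Theory.
Local Open Scope classical_set_scope.
Local Open Scope ring_scope.

Section Defs.
Variable R : realType.

Definition vec2 (a b : R) : 'cV[R]_2 :=
  \col_(i < 2) (if i == ord0 then a else b).

Definition vnorm (v : 'cV[R]_2) : R :=
  Num.sqrt (v ord0 ord0 ^+ 2 + v ord_max ord0 ^+ 2).

Definition opnorm (M : 'M[R]_2) : R :=
  sup [set vnorm (M *m v) | v in [set v | vnorm v = 1]].

(* RP^1 identified with R / pi Z; points are represented by reals.
   The induced (quotient) metric: *)
Definition dP (x y : R) : R :=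
  inf [set `|x - y - k%:~R * pi| | k in [set: int]].

(* induced action of A on RP^1 = R / pi Z: the direction theta maps to
   (a representative of) the direction of A (cos theta, sin theta). *)
Definition phiA (A : 'M[R]_2) (t : R) : R :=
  xget 0 [set t' | exists l : R, l != 0 /\
        vec2 (cos t') (sin t') = l *: (A *m vec2 (cos t) (sin t))].

Variable L : finType.
Variable A : L -> 'M[R]_2.

Definition Aw (n : nat) (w : n.-tuple L) : 'M[R]_2 := \prod_(k <- w) A k.

Definition phiw (n : nat) (w : n.-tuple L) : R -> R :=
  foldr (fun k f => phiA (A k) \o f) id w.

Definition same_map (f g : R -> R) : Prop := forall x, dP (f x) (g x) = 0.

Definition strong_exp_sep (J : set R) : Prop :=
  (forall n (w1 w2 : n.-tuple L), same_map (phiw w1) (phiw w2) -> w1 = w2) /\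
  exists c : R, 0 < c /\
    forall n (w1 w2 : n.+1.-tuple L), thead w1 != thead w2 ->
      c ^+ n.+1 < sup [set dP (phiw w1 x) (phiw w2 x) | x in J].

Definition strongly_diophantine : Prop :=
  exists c : R, 0 < c /\
    forall n (w1 w2 : n.-tuple L), w1 != w2 ->
      c ^+ n < opnorm (Aw w1 - Aw w2).

End Defs.

Definition three_points (R : realType) (J : set R) : Prop :=
  exists x y z, [/\ J x, J y & J z] /\
    [/\ dP x y != 0, dP y z != 0 & dP x z != 0].

(* Main.v *)
Require Import Defs.
From HB Require Import structures.
From mathcomp Require Import all_boot all_order all_algebra.
From mathcomp Require Import all_classical all_reals all_analysis.
From mathcomp Require Import ring lra.
Import Order.TTheory GRing.Theory Num.Theory.
Import numFieldNormedType.Exports.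
Set Implicit Arguments. Unset Strict Implicit. Unset Printing Implicit Defensive.
Local Open Scope classical_set_scope.
Local Open Scope ring_scope.
Section Trig.
Variable R : realType.

Lemma sin_cont_within (A : set R) : {within A, continuous (@sin R)}.
Proof. by apply: continuous_subspaceT => y; exact: continuous_sin. Qed.

Lemma abs_sin_le_pos (y : R) : 0 < y -> `|sin y| <= y.
Proof.
move=> y0.
have [c _ H] := @MVT R sin cos 0 y y0 (fun y _ => is_derive_sin y)
  (@sin_cont_within _).
move: H; rewrite sin0 !subr0 => ->.
rewrite normrM (gtr0_norm y0).
have := cos_max c; nra.
Qed.

Lemma abs_sin_le (x : R) : `|sin x| <= `|x|.
Proof.
have H := abs_sin_le_pos.
case: (ltrgtP x 0) => hx.
- by rewrite -normrN -sinN (ltr0_norm hx); apply: H; lra.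
- by rewrite (gtr0_norm hx); apply: H.
- by rewrite hx sin0 normr0.
Qed.

Lemma cos_pi4_sq : cos (pi / 4 : R) ^+ 2 = 1 / 2.
Proof.
have := cos_mulr2n (pi / 4 : R).
have -> : (pi / 4 : R) *+ 2 = pi / 2 by rewrite mulr2n; field.
rewrite cos_pihalf mulr2n => h; lra.
Qed.

Lemma cos_pi4_gt0 : 0 < cos (pi / 4 : R).
Proof. apply: cos_gt0_pihalf; have := @pi_gt0 R; lra. Qed.

Lemma sin_pi4 : sin (pi / 4 : R) = cos (pi / 4).
Proof.
rewrite -cosBpihalf -cosN; congr cos; lra.
Qed.

Lemma cos_decr (x y : R) : 0 <= x -> x <= y -> y <= pi -> cos y <= cos x.
Proof.
move=> x0 xy ypi; case: (eqVneq x y) => [->//|nxy].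
have lxy : x < y by rewrite lt_neqAle nxy xy.
apply: ltW; rewrite ltr_cos ?in_itv /= ?lxy //; apply/andP; split; lra.
Qed.

Lemma subr_ge0_hint (a b : R) : a <= b -> 0 <= b - a.
Proof. by rewrite subr_ge0. Qed.

Lemma jordan_help (w a b : R) : 0 < w -> 1 / 2 <= a * b ->
  w *+ 2 <= 2 * (a * (b * w) *+ 2).
Proof. move=> h1 h2; rewrite !mulr2n. nra. Qed.

Lemma jordan_pos (x : R) : 0 <= x <= pi / 2 -> x <= 2 * sin x.
Proof.
move=> /andP [x0 xp]; case: (eqVneq x 0) => [->|nx0]; first by rewrite sin0; lra.
have xg : 0 < x by rewrite lt_neqAle eq_sym nx0.
have pg := @pi_gt0 R.
pose w := x / 2.
have wg : 0 < w by rewrite /w; lra.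
have [c cI H] := @MVT R sin cos 0 w wg (fun y _ => is_derive_sin y)
  (@sin_cont_within _).
move: H; rewrite sin0 !subr0 => Hw.
move: cI; rewrite in_itv /= => /andP [c0 cw].
have hc : cos (pi / 4) <= cos c by apply: cos_decr; rewrite /w in cw *; lra.
have hw : cos (pi / 4) <= cos w by apply: cos_decr; rewrite /w; lra.
have -> : x = w *+ 2 by rewrite /w mulr2n; field.
rewrite sin_mulr2n Hw.
have := cos_pi4_sq; have := cos_pi4_gt0 => h1 h2.
have hcw : cos (pi/4) ^+ 2 <= cos w * cos c.
  by rewrite expr2; apply: ler_pM => //; lra.
rewrite h2 in hcw.
apply: jordan_help => //.
Qed.

Lemma jordan (x : R) : `|x| <= pi / 2 -> `|x| <= 2 * `|sin x|.
Proof.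
case: (lerP 0 x) => hx.
- rewrite (ger0_norm hx) => h.
  have hs : 0 <= sin x by apply: sin_ge0_pi; apply/andP; split; have := @pi_gt0 R; lra.
  by rewrite (ger0_norm hs); apply: jordan_pos; apply/andP.
- rewrite (ltr0_norm hx) => h.
  rewrite -normrN -sinN.
  have hs : 0 <= sin (- x) by apply: sin_ge0_pi; apply/andP; split; have := @pi_gt0 R; lra.
  by rewrite (ger0_norm hs); apply: jordan_pos; apply/andP; split; lra.
Qed.

Lemma abs_sin_addpin (y : R) n : `|sin (y + pi *+ n)| = `|sin y|.
Proof.
by rewrite (alternatingn (@sinDpi R)) normrM normrX normrN1 expr1n mul1r.
Qed.

Lemma abs_sin_subk (x : R) (k : int) : `|sin (x - k%:~R * pi)| = `|sin x|.
Proof.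
case: k => n.
- have e : x = (x - (Posz n)%:~R * pi) + pi *+ n.
    by rewrite (_ : (Posz n)%:~R = n%:R :> R) // mulr_natl subrK.
  by rewrite {2}e abs_sin_addpin.
- rewrite NegzE mulrNz mulNr opprK.
  by rewrite (_ : (Posz n.+1)%:~R = n.+1%:R :> R) // mulr_natl abs_sin_addpin.
Qed.

Lemma polar (a b : R) : a ^+ 2 + b ^+ 2 = 1 -> exists t, cos t = a /\ sin t = b.
Proof.
move=> h.
have ha : a \in `[-1, 1] by rewrite in_itv /=; apply/andP; split; nra.
have hs : sin (acos a) = `|b|.
  by rewrite sin_acos ?(itvP ha) // -sqrtr_sqr; congr Num.sqrt; lra.
case: (lerP 0 b) => hb.
- by exists (acos a); rewrite acosK // hs ger0_norm.
- by exists (- acos a); rewrite cosN sinN acosK // hs ltr0_norm // opprK.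
Qed.

End Trig.
Section DP.
Variable R : realType.

Lemma dP_ge (x y : R) : `|sin (x - y)| <= dP x y.
Proof.
rewrite /dP; apply: lb_le_inf.
  by exists `|x - y - 0%:~R * pi|; exists 0.
move=> z [k _ <-]; rewrite -(abs_sin_subk (x - y) k); exact: abs_sin_le.
Qed.

Lemma dP_ge0 (x y : R) : 0 <= dP x y.
Proof. exact: le_trans (normr_ge0 _) (dP_ge x y). Qed.

Lemma dP_le (x y : R) : dP x y <= 2 * `|sin (x - y)|.
Proof.
have pg := @pi_gt0 R.
set D := (x - y) / pi.
set k := Num.floor (D + 1/2).
have hk := floor_itv (D + 1/2); rewrite -/k in hk.
have le : dP x y <= `|x - y - k%:~R * pi|.
  rewrite /dP; apply: ge_inf; last by exists k.
  by exists 0 => _ [k' _ <-]; exact: normr_ge0.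
apply: le_trans le _; rewrite -(abs_sin_subk (x - y) k); apply: jordan.
have -> : x - y - k%:~R * pi = (D - k%:~R) * pi.
  by rewrite /D mulrBl divfK ?gt_eqF.
move: hk; rewrite intrD => /andP [h1 h2].
rewrite normrM (gtr0_norm pg).
have : `|D - k%:~R| <= 1/2 by rewrite ler_norml; apply/andP; split; lra.
move: pg; clear; move=> pg h; nra.
Qed.

Lemma dP_le2 (x y : R) : dP x y <= 2.
Proof. apply: le_trans (dP_le x y) _; have := sin_max (x - y); lra. Qed.

End DP.
Notation i0 := (@ord0 1).
Notation i1 := (@ord_max 1).
Notation j0 := (@ord0 0).

Section Mx.
Variable R : realType.

Lemma sum2 (F : 'I_2 -> R) : \sum_(k < 2) F k = F i0 + F i1.
Proof. by rewrite big_ord_recl big_ord1; congr (_ + F _); apply: val_inj. Qed.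

Lemma ord2P (P : 'I_2 -> Prop) : P i0 -> P i1 -> forall i, P i.
Proof. move=> H0 H1 [[|[|m]] Hm] //.
- by have -> : Ordinal Hm = i0 by apply: val_inj.
- by have -> : Ordinal Hm = i1 by apply: val_inj.
Qed.

Lemma mul22 p (M : 'M[R]_2) (N : 'M[R]_(2,p)) i j : (M *m N) i j = M i i0 * N i0 j + M i i1 * N i1 j.
Proof. by rewrite !mxE sum2. Qed.

Lemma mul22' (M N : 'M[R]_2) i j : (M * N) i j = M i i0 * N i0 j + M i i1 * N i1 j.
Proof. exact: mul22. Qed.

Lemma det22 (M : 'M[R]_2) : \det M = M i0 i0 * M i1 i1 - M i0 i1 * M i1 i0.
Proof.
rewrite (expand_det_row _ i0) sum2 /cofactor !det_mx11 !mxE /=.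
have -> : lift i0 0 = i1 by apply: val_inj.
have -> : lift i1 0 = i0 by apply: val_inj.
rewrite /= expr0 expr1 mul1r; ring.
Qed.

Lemma id22 i j : (1 : 'M[R]_2) i j = (i == j)%:R.
Proof. by rewrite !mxE. Qed.

Lemma mv22 (M : 'M[R]_2) (a b : R) i j : (M *m vec2 a b) i j = M i i0 * a + M i i1 * b.
Proof. by rewrite mul22 !mxE. Qed.

Definition fr (M : 'M[R]_2) :=
  M i0 i0 ^+ 2 + M i0 i1 ^+ 2 + M i1 i0 ^+ 2 + M i1 i1 ^+ 2.

Lemma cs2 (a b c d : R) : (a*c + b*d)^+2 <= (a^+2+b^+2)*(c^+2+d^+2).
Proof. have := sqr_ge0 (a*d-b*c). nra. Qed.

Lemma frmul_sc (a00 a01 a10 a11 b00 b01 b10 b11 : R) :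
  (a00*b00 + a01*b10)^+2 + (a00*b01 + a01*b11)^+2 +
  (a10*b00 + a11*b10)^+2 + (a10*b01 + a11*b11)^+2 <=
  (a00^+2 + a01^+2 + a10^+2 + a11^+2) * (b00^+2 + b01^+2 + b10^+2 + b11^+2).
Proof.
have h1 := cs2 a00 a01 b00 b10.
have h2 := cs2 a00 a01 b01 b11.
have h3 := cs2 a10 a11 b00 b10.
have h4 := cs2 a10 a11 b01 b11.
have -> : (a00^+2 + a01^+2 + a10^+2 + a11^+2) * (b00^+2 + b01^+2 + b10^+2 + b11^+2) =
  (a00^+2+a01^+2)*(b00^+2+b10^+2) + (a00^+2+a01^+2)*(b01^+2+b11^+2) +
  (a10^+2+a11^+2)*(b00^+2+b10^+2) + (a10^+2+a11^+2)*(b01^+2+b11^+2) by ring.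
lra.
Qed.

Lemma fr_mul (M N : 'M[R]_2) : fr (M *m N) <= fr M * fr N.
Proof. rewrite /fr !mul22; exact: frmul_sc. Qed.

Lemma fr_ge0 (M : 'M[R]_2) : 0 <= fr M.
Proof. rewrite /fr; have := sqr_ge0 (M i0 i0); have := sqr_ge0 (M i0 i1);
  have := sqr_ge0 (M i1 i0); have := sqr_ge0 (M i1 i1); lra. Qed.

Lemma fr_vec (M : 'M[R]_2) (a b : R) : a ^+ 2 + b ^+ 2 = 1 ->
  (M i0 i0 * a + M i0 i1 * b) ^+ 2 + (M i1 i0 * a + M i1 i1 * b) ^+ 2 <= fr M.
Proof.
move=> h; have h1 := cs2 (M i0 i0) (M i0 i1) a b.
have h2 := cs2 (M i1 i0) (M i1 i1) a b.
rewrite h mulr1 in h1; rewrite h mulr1 in h2; rewrite /fr; lra.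
Qed.

Lemma phiA_spec (A : 'M[R]_2) (t : R) : \det A != 0 ->
  exists l, l != 0 /\
    cos (phiA A t) = l * (A i0 i0 * cos t + A i0 i1 * sin t) /\
    sin (phiA A t) = l * (A i1 i0 * cos t + A i1 i1 * sin t).
Proof.
move=> hd.
set a := A i0 i0 * cos t + A i0 i1 * sin t.
set b := A i1 i0 * cos t + A i1 i1 * sin t.
have hab : 0 < a ^+ 2 + b ^+ 2.
  rewrite lt_neqAle addr_ge0 ?sqr_ge0 // andbT eq_sym; apply/negP => /eqP h0.
  have ha : a = 0 by apply/eqP; rewrite -sqrf_eq0 eq_le sqr_ge0 andbT; have := sqr_ge0 b; lra.
  have hb : b = 0 by apply/eqP; rewrite -sqrf_eq0 eq_le sqr_ge0 andbT; have := sqr_ge0 a; lra.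
  have ec : \det A * cos t = A i1 i1 * a - A i0 i1 * b by rewrite det22 /a /b; ring.
  have es : \det A * sin t = A i0 i0 * b - A i1 i0 * a by rewrite det22 /a /b; ring.
  rewrite ha hb !mulr0 subrr in ec es.
  move/eqP: ec; rewrite mulf_eq0 (negbTE hd) /= => /eqP ec.
  move/eqP: es; rewrite mulf_eq0 (negbTE hd) /= => /eqP es.
  by have := cos2Dsin2 t; rewrite ec es expr2 mulr0 addr0 => /eqP; rewrite eq_sym oner_eq0.
set r := Num.sqrt (a ^+ 2 + b ^+ 2).
have r0 : 0 < r by rewrite sqrtr_gt0.
have r2 : r ^+ 2 = a ^+ 2 + b ^+ 2 by rewrite sqr_sqrtr // ltW.
have [t0 [ct0 st0]] : exists t0, cos t0 = r^-1 * a /\ sin t0 = r^-1 * b.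
  apply: polar.
  rewrite !exprMn -mulrDr -r2 exprVn mulVf //.
  by rewrite expf_neq0 // gt_eqF.
set P := [set t' | exists l : R, l != 0 /\
        vec2 (cos t') (sin t') = l *: (A *m vec2 (cos t) (sin t))].
have Pt0 : P t0.
  exists r^-1; split; first by rewrite invr_eq0 gt_eqF.
  apply/matrixP => i j; rewrite (ord1 j); move: i; apply: ord2P.
  - by rewrite [LHS]mxE [RHS]mxE mv22 -/a /= ct0.
  - by rewrite [LHS]mxE [RHS]mxE mv22 -/b /= st0.
have := xgetPex 0 (ex_intro _ t0 Pt0).
rewrite -/(phiA A t) => -[l [hl /matrixP he]].
exists l; split => //; split.
- by have := he i0 j0; rewrite [LHS]mxE [RHS]mxE mv22 /=.
- by have := he i1 j0; rewrite [LHS]mxE [RHS]mxE mv22 /=.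
Qed.

End Mx.
Lemma angle_id (R : realType) (f1 f2 l1 l2 p0 p1 q0 q1 : R) :
  cos f1 = l1 * p0 -> sin f1 = l1 * p1 -> cos f2 = l2 * q0 -> sin f2 = l2 * q1 ->
  sin (f1 - f2) ^+ 2 * (p0^+2 + p1^+2) * (q0^+2 + q1^+2) = (p1 * q0 - p0 * q1) ^+ 2.
Proof.
move=> c1 s1 c2 s2.
have h1 : l1 ^+ 2 * (p0^+2 + p1^+2) = 1 by rewrite -(cos2Dsin2 f1) c1 s1; ring.
have h2 : l2 ^+ 2 * (q0^+2 + q1^+2) = 1 by rewrite -(cos2Dsin2 f2) c2 s2; ring.
rewrite sinB c1 s1 c2 s2.
have -> : (l1 * p1 * (l2 * q0) - l1 * p0 * (l2 * q1)) ^+ 2 * (p0 ^+ 2 + p1 ^+ 2) *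
  (q0 ^+ 2 + q1 ^+ 2) = (p1 * q0 - p0 * q1) ^+ 2 * (l1 ^+ 2 * (p0^+2 + p1^+2)) *
  (l2 ^+ 2 * (q0^+2 + q1^+2)) by ring.
by rewrite h1 h2 !mulr1.
Qed.

Lemma min1_in (R : realType) (x : R) : 0 <= x -> (0 <= Num.min 1 x) && (Num.min 1 x <= 1) /\ Num.min 1 x <= x.
Proof. move=> h; rewrite /Num.min; case: ifP => h1; split; try (apply/andP; split); lra. Qed.

Section Words.
Variable R : realType.
Variable L : finType.
Variable A : L -> 'M[R]_2.
Hypothesis hdet : forall i, \det (A i) != 0.

Definition phis (s : seq L) : R -> R := foldr (fun k f => phiA (A k) \o f) id s.
Definition Aws (s : seq L) : 'M[R]_2 := \prod_(k <- s) A k.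

Lemma Aws_cons k s : Aws (k :: s) = A k * Aws s.
Proof. by rewrite /Aws big_cons. Qed.

Lemma Aws_nil : Aws [::] = 1.
Proof. by rewrite /Aws big_nil. Qed.

Lemma Aws_cat s1 s2 : Aws (s1 ++ s2) = Aws s1 * Aws s2.
Proof. by rewrite /Aws big_cat. Qed.

Lemma phis_spec s t : exists l, l != 0 /\
  cos (phis s t) = l * (Aws s i0 i0 * cos t + Aws s i0 i1 * sin t) /\
  sin (phis s t) = l * (Aws s i1 i0 * cos t + Aws s i1 i1 * sin t).
Proof.
elim: s => [|k s [l [hl [ec es]]]].
  exists 1; split; first exact: oner_neq0.
  by rewrite Aws_nil !id22 /=; split; ring.
have [l' [hl' [ec' es']]] := phiA_spec (phis s t) (hdet k).
exists (l' * l); split; first by rewrite mulf_neq0.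
rewrite Aws_cons !mul22' /=; rewrite ec' es' ec es; split; ring.
Qed.

Lemma pair_id s1 s2 t :
  let P := Aws s1 in let Q := Aws s2 in
  let p0 := P i0 i0 * cos t + P i0 i1 * sin t in
  let p1 := P i1 i0 * cos t + P i1 i1 * sin t in
  let q0 := Q i0 i0 * cos t + Q i0 i1 * sin t in
  let q1 := Q i1 i0 * cos t + Q i1 i1 * sin t in
  sin (phis s1 t - phis s2 t) ^+ 2 * (p0^+2 + p1^+2) * (q0^+2 + q1^+2) =
  (p1 * q0 - p0 * q1) ^+ 2.
Proof.
have [l1 [_ [c1 s1']]] := phis_spec s1 t.
have [l2 [_ [c2 s2']]] := phis_spec s2 t.
exact: angle_id c1 s1' c2 s2'.
Qed.

Definition Kb : R := 1 + \sum_i fr (A i).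
Definition db : R := \prod_i Num.min 1 `|\det (A i)|.

Lemma Kb_ge1 : 1 <= Kb.
Proof. rewrite /Kb lerDl; apply: sumr_ge0 => i _; exact: fr_ge0. Qed.

Lemma fr_A_le i : fr (A i) <= Kb.
Proof.
rewrite /Kb (bigD1 i) //= addrCA lerDl addr_ge0 //.
by apply: sumr_ge0 => j _; exact: fr_ge0.
Qed.

Lemma db_gt0 : 0 < db.
Proof.
apply: prodr_gt0 => i _; rewrite /Num.min; case: ifP => _; first exact: ltr01.
by rewrite normr_gt0; exact: hdet.
Qed.

Lemma db_le1 : db <= 1.
Proof.
by apply: prodr_ile1 => i _; case: (min1_in (normr_ge0 (\det (A i)))).
Qed.

Lemma db_le i : db <= `|\det (A i)|.
Proof.
rewrite /db (bigD1 i) //=.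
have h1 : \prod_(j | j != i) Num.min 1 `|\det (A j)| <= 1.
  by apply: prodr_ile1 => j _; case: (min1_in (normr_ge0 (\det (A j)))).
have h0 : 0 <= \prod_(j | j != i) Num.min 1 `|\det (A j)|.
  by apply: prodr_ge0 => j _; case: (min1_in (normr_ge0 (\det (A j)))) => /andP[].
have [/andP [hm0 _] hm] := min1_in (normr_ge0 (\det (A i))).
nra.
Qed.

Lemma fr_Aws s : fr (Aws s) <= 2 * Kb ^+ size s.
Proof.
elim: s => [|k s IH].
  rewrite Aws_nil /fr !id22 /= expr0; lra.
rewrite Aws_cons; apply: le_trans (fr_mul _ _) _.
rewrite /= exprS.
have := fr_A_le k; have := fr_ge0 (A k); have := fr_ge0 (Aws s).
have : 0 <= Kb ^+ size s by apply: exprn_ge0; have := Kb_ge1; lra.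
nra.
Qed.

Lemma det_Aws s : db ^+ size s <= `|\det (Aws s)|.
Proof.
elim: s => [|k s IH].
  by rewrite Aws_nil det1 expr0 normr1.
rewrite Aws_cons detM normrM /= exprS.
apply: ler_pM => //; first exact: ltW db_gt0.
  by apply: exprn_ge0; exact: ltW db_gt0.
exact: db_le.
Qed.

End Words.
Section Opn.
Variable R : realType.

Lemma sqrt_sq_le (a b : R) : 0 <= a -> 0 <= b -> Num.sqrt a <= b -> a <= b ^+ 2.
Proof.
move=> a0 b0 h; have := sqr_sqrtr a0; have := sqrtr_ge0 a.
move: (Num.sqrt a) h => s h1 h2 h3; nra.
Qed.

Lemma vnorm_vec (a b : R) : vnorm (vec2 a b) = Num.sqrt (a ^+ 2 + b ^+ 2).
Proof. by rewrite /vnorm !mxE. Qed.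

Lemma opn_ub (M : 'M[R]_2) v : vnorm v = 1 -> vnorm (M *m v) <= Num.sqrt (fr M).
Proof.
rewrite /vnorm => hv.
have h1 := sqr_sqrtr (addr_ge0 (sqr_ge0 (v i0 j0)) (sqr_ge0 (v i1 j0))).
rewrite hv expr1n in h1.
apply: ler_wsqrtr; rewrite !mul22.
exact: fr_vec (esym h1).
Qed.

Lemma opn_ne (M : 'M[R]_2) :
  [set vnorm (M *m v) | v in [set v | vnorm v = 1]] !=set0.
Proof.
exists (vnorm (M *m vec2 1 0)); exists (vec2 1 0) => //.
by rewrite /= vnorm_vec expr1n expr0n addr0 sqrtr1.
Qed.

Lemma opn_hub (M : 'M[R]_2) :
  has_ubound [set vnorm (M *m v) | v in [set v | vnorm v = 1]].
Proof. by exists (Num.sqrt (fr M)) => _ [v hv <-]; exact: opn_ub. Qed.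

Lemma opnorm_le (M : 'M[R]_2) : opnorm M <= Num.sqrt (fr M).
Proof. by apply: ge_sup; [exact: opn_ne | move=> _ [v hv <-]; exact: opn_ub]. Qed.

Lemma opnorm_col0 (M : 'M[R]_2) : Num.sqrt (M i0 i0 ^+ 2 + M i1 i0 ^+ 2) <= opnorm M.
Proof.
apply: ub_le_sup; first exact: opn_hub.
exists (vec2 1 0); first by rewrite /= vnorm_vec expr1n expr0n addr0 sqrtr1.
by rewrite /vnorm !mv22 !mulr1 !mulr0 !addr0.
Qed.

Lemma opnorm_col1 (M : 'M[R]_2) : Num.sqrt (M i0 i1 ^+ 2 + M i1 i1 ^+ 2) <= opnorm M.
Proof.
apply: ub_le_sup; first exact: opn_hub.
exists (vec2 0 1); first by rewrite /= vnorm_vec expr1n expr0n add0r sqrtr1.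
by rewrite /vnorm !mv22 !mulr1 !mulr0 !add0r.
Qed.

Lemma opnorm_ge0 (M : 'M[R]_2) : 0 <= opnorm M.
Proof. exact: le_trans (sqrtr_ge0 _) (opnorm_col0 M). Qed.

Lemma opnorm_sq_le (M : 'M[R]_2) : opnorm M ^+ 2 <= fr M.
Proof.
have h := opnorm_le M; have h0 := opnorm_ge0 M.
have := sqr_sqrtr (fr_ge0 M); have := sqrtr_ge0 (fr M).
move: (Num.sqrt (fr M)) h => s h1 h2 h3; nra.
Qed.

Lemma fr_le_opnorm (M : 'M[R]_2) : fr M <= 2 * opnorm M ^+ 2.
Proof.
have h0 := opnorm_ge0 M.
have h1 := sqrt_sq_le (addr_ge0 (sqr_ge0 _) (sqr_ge0 _)) h0 (opnorm_col0 M).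
have h2 := sqrt_sq_le (addr_ge0 (sqr_ge0 _) (sqr_ge0 _)) h0 (opnorm_col1 M).
rewrite /fr; lra.
Qed.

End Opn.
Section FrL.
Variable R : realType.

Lemma eqle (x y : R) : x = y -> x <= y.
Proof. by move->. Qed.

Lemma frB (P Q : 'M[R]_2) : fr (P - Q) = fr (Q - P).
Proof. rewrite /fr !mxE; ring. Qed.

Lemma frD_le (P Q : 'M[R]_2) : fr (P + Q) <= 2 * fr P + 2 * fr Q.
Proof.
rewrite /fr !mxE.
have h a b : (a + b) ^+ 2 <= 2 * a ^+ 2 + 2 * b ^+ 2 :> R.
  by have := sqr_ge0 (a - b); nra.
have := h (P i0 i0) (Q i0 i0); have := h (P i0 i1) (Q i0 i1);
have := h (P i1 i0) (Q i1 i0); have := h (P i1 i1) (Q i1 i1); lra.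
Qed.

Lemma frBm_le (P Q : 'M[R]_2) : fr (P - Q) <= 2 * fr P + 2 * fr Q.
Proof.
have -> : fr Q = fr (- Q) by rewrite /fr !mxE; ring.
exact: frD_le.
Qed.

Lemma fr_det_mul (M X : 'M[R]_2) : \det M ^+ 2 * fr X <= fr M * fr (M *m X).
Proof.
have h := frmul_sc (M i1 i1) (- M i0 i1) (- M i1 i0) (M i0 i0)
  ((M *m X) i0 i0) ((M *m X) i0 i1) ((M *m X) i1 i0) ((M *m X) i1 i1).
rewrite !mul22 in h *; rewrite det22 /fr !mul22.
move: h.
set a00 := M i0 i0; set a01 := M i0 i1; set a10 := M i1 i0; set a11 := M i1 i1.
set x00 := X i0 i0; set x01 := X i0 i1; set x10 := X i1 i0; set x11 := X i1 i1.
move=> h.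
apply: le_trans _ (le_trans h _).
  apply: eqle; ring.
apply: eqle; ring.
Qed.

Lemma det_le_vec (Q : 'M[R]_2) (c s : R) : c ^+ 2 + s ^+ 2 = 1 ->
  \det Q ^+ 2 <= ((Q i0 i0 * c + Q i0 i1 * s) ^+ 2 + (Q i1 i0 * c + Q i1 i1 * s) ^+ 2) * fr Q.
Proof.
move=> h.
have hr : (- s) ^+ 2 + c ^+ 2 = 1 by rewrite sqrrN addrC.
have h1 := fr_vec Q hr.
set q0 := Q i0 i0 * c + Q i0 i1 * s.
set q1 := Q i1 i0 * c + Q i1 i1 * s.
set r0 := Q i0 i0 * - s + Q i0 i1 * c.
set r1 := Q i1 i0 * - s + Q i1 i1 * c.
have e : \det Q = q0 * r1 + (- q1) * r0.
  by rewrite det22 /q0 /q1 /r0 /r1 -[LHS]mulr1 -h; ring.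
have h2 := cs2 q0 (- q1) r1 r0.
rewrite -e sqrrN in h2.
apply: le_trans h2 _; apply: ler_wpM2l; first by rewrite addr_ge0 ?sqr_ge0.
by rewrite addrC.
Qed.

Lemma cross_le (p0 p1 q0 q1 : R) :
  (p1 * q0 - p0 * q1) ^+ 2 <= (p0 ^+ 2 + p1 ^+ 2) * ((q0 - p0) ^+ 2 + (q1 - p1) ^+ 2).
Proof.
have h := cs2 p1 (- p0) (q0 - p0) (q1 - p1).
apply: le_trans _ (le_trans h _); apply: eqle; [|rewrite sqrrN]; ring.
Qed.

Lemma frB_vec (P Q : 'M[R]_2) (c s : R) : c ^+ 2 + s ^+ 2 = 1 ->
  ((Q i0 i0 * c + Q i0 i1 * s) - (P i0 i0 * c + P i0 i1 * s)) ^+ 2 +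
  ((Q i1 i0 * c + Q i1 i1 * s) - (P i1 i0 * c + P i1 i1 * s)) ^+ 2 <= fr (Q - P).
Proof.
move=> h; have := fr_vec (Q - P) h; rewrite !mxE.
apply: le_trans; apply: eqle; ring.
Qed.

End FrL.
Section Alg.
Variable R : realType.

Lemma sq3 (x y z : R) : (x + y + z) ^+ 2 <= 3 * (x ^+ 2 + y ^+ 2 + z ^+ 2).
Proof. have := sqr_ge0 (x - y); have := sqr_ge0 (y - z); have := sqr_ge0 (x - z); nra. Qed.

Lemma sq2 (x y : R) : (x + y) ^+ 2 <= 2 * (x ^+ 2 + y ^+ 2).
Proof. have := sqr_ge0 (x - y); nra. Qed.

Lemma alg_core (P Q : 'M[R]_2) (M e : R) :
  \det P = 1 -> \det Q = 1 -> fr P <= M -> fr Q <= M -> 1 <= M -> 0 <= e ->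
  (P i1 i0 * Q i0 i0 - P i0 i0 * Q i1 i0) ^+ 2 <= e ->
  (P i1 i1 * Q i0 i1 - P i0 i1 * Q i1 i1) ^+ 2 <= e ->
  ((P i1 i0 + P i1 i1) * (Q i0 i0 + Q i0 i1) - (P i0 i0 + P i0 i1) * (Q i1 i0 + Q i1 i1)) ^+ 2 <= e ->
  fr (Q - P) <= 80 * M ^+ 3 * e \/ fr (Q + P) <= 80 * M ^+ 3 * e.
Proof.
rewrite !det22 /fr !mxE.
set p00 := P i0 i0; set p01 := P i0 i1; set p10 := P i1 i0; set p11 := P i1 i1.
set q00 := Q i0 i0; set q01 := Q i0 i1; set q10 := Q i1 i0; set q11 := Q i1 i1.
move=> hP hQ hfP hfQ hM he hc0 hc1 hc2.
set n00 := p11 * q00 - p01 * q10.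
set n01 := p11 * q01 - p01 * q11.
set n10 := - p10 * q00 + p00 * q10.
set n11 := - p10 * q01 + p00 * q11.
have hN : n00 * n11 - n01 * n10 = 1.
  transitivity ((p00 * p11 - p01 * p10) * (q00 * q11 - q01 * q10)).
    by rewrite /n00 /n01 /n10 /n11; ring.
  by rewrite hP hQ mulr1.
have frN : n00 ^+ 2 + n01 ^+ 2 + n10 ^+ 2 + n11 ^+ 2 <= M ^+ 2.
  have h := frmul_sc p11 (- p01) (- p10) p00 q00 q01 q10 q11.
  have h2 : n00 ^+ 2 + n01 ^+ 2 + n10 ^+ 2 + n11 ^+ 2 <= (p00 ^+ 2 + p01 ^+ 2 + p10 ^+ 2 + p11 ^+ 2) *
     (q00 ^+ 2 + q01 ^+ 2 + q10 ^+ 2 + q11 ^+ 2).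
    apply: le_trans (le_trans h _); apply: eqle; rewrite /n00 /n01 /n10 /n11; ring.
  apply: le_trans h2 _.
  rewrite expr2; apply: ler_pM => //; rewrite ?addr_ge0 ?sqr_ge0 //.
have hM2 : 1 <= M ^+ 2 by rewrite -(expr1n _ 2); apply: lerXn2r; rewrite ?nnegrE //; lra.
have en10 : n10 ^+ 2 <= e.
  by apply: le_trans hc0; apply: eqle; rewrite /n10; ring.
have en01 : n01 ^+ 2 <= e.
  by apply: le_trans hc1; apply: eqle; rewrite /n01; ring.
set d := n11 - n00.
have hd : d ^+ 2 <= 9 * e.
  have -> : d = n01 + (- n10) + (- ((p10 + p11) * (q00 + q01) - (p00 + p01) * (q10 + q11))).
    by rewrite /d /n00 /n01 /n10 /n11; ring.
  apply: le_trans (sq3 _ _ _) _; rewrite !sqrrN; lra.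
set a := n00.
have ha : a ^+ 2 - 1 = n01 * n10 - a * d.
  by rewrite -hN /d /a; ring.
have a2 : a ^+ 2 <= M ^+ 2.
  by apply: le_trans frN; have := sqr_ge0 n01; have := sqr_ge0 n10; have := sqr_ge0 n11; rewrite /a; lra.
have n012 : n01 ^+ 2 <= M ^+ 2.
  by apply: le_trans frN; have := sqr_ge0 n00; have := sqr_ge0 n10; have := sqr_ge0 n11; lra.
have hsq : (a ^+ 2 - 1) ^+ 2 <= 20 * M ^+ 2 * e.
  rewrite ha; apply: le_trans (sq2 _ _) _.
  rewrite sqrrN !exprMn.
  have t1 : n01 ^+ 2 * n10 ^+ 2 <= M ^+ 2 * e by apply: ler_pM; rewrite ?sqr_ge0.
  have t2 : a ^+ 2 * d ^+ 2 <= M ^+ 2 * (9 * e) by apply: ler_pM; rewrite ?sqr_ge0.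
  lra.
have Me : M ^+ 2 * e >= e by rewrite -[X in X <= _]mul1r; apply: ler_wpM2r.
have hM0 : 0 <= M by lra.
have fPX (x00 x01 x10 x11 : R) :
  x00 ^+ 2 + x01 ^+ 2 + x10 ^+ 2 + x11 ^+ 2 <= 80 * M ^+ 2 * e ->
  (p00 * x00 + p01 * x10) ^+ 2 + (p00 * x01 + p01 * x11) ^+ 2 +
  (p10 * x00 + p11 * x10) ^+ 2 + (p10 * x01 + p11 * x11) ^+ 2 <= 80 * M ^+ 3 * e.
  move=> hx; apply: le_trans (frmul_sc _ _ _ _ _ _ _ _) _.
  have -> : 80 * M ^+ 3 * e = M * (80 * M ^+ 2 * e) by ring.
  apply: ler_pM => //; rewrite ?addr_ge0 ?sqr_ge0 //.
have hd0 := sqr_ge0 d.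
have a1 := sqr_ge0 (a - 1).
have a1' := sqr_ge0 (a + 1).
case: (lerP 0 a) => ha0.
- left.
  have e1 : (a - 1) ^+ 2 <= 20 * M ^+ 2 * e.
    apply: le_trans hsq.
    have h : 0 <= (a - 1) ^+ 2 * (a ^+ 2 + 2 * a) by apply: mulr_ge0 => //; nra.
    have -> : (a ^+ 2 - 1) ^+ 2 = (a - 1) ^+ 2 + (a - 1) ^+ 2 * (a ^+ 2 + 2 * a) by ring.
    lra.
  have -> : q00 - p00 = p00 * (a - 1) + p01 * n10.
    transitivity (q00 * (p00 * p11 - p01 * p10) - p00); first by rewrite hP mulr1.
    by rewrite /a /n00 /n10; ring.
  have -> : q01 - p01 = p00 * n01 + p01 * (n11 - 1).
    transitivity (q01 * (p00 * p11 - p01 * p10) - p01); first by rewrite hP mulr1.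
    by rewrite /n01 /n11; ring.
  have -> : q10 - p10 = p10 * (a - 1) + p11 * n10.
    transitivity (q10 * (p00 * p11 - p01 * p10) - p10); first by rewrite hP mulr1.
    by rewrite /a /n00 /n10; ring.
  have -> : q11 - p11 = p10 * n01 + p11 * (n11 - 1).
    transitivity (q11 * (p00 * p11 - p01 * p10) - p11); first by rewrite hP mulr1.
    by rewrite /n01 /n11; ring.
  apply: fPX.
  have -> : n11 - 1 = (a - 1) + d by rewrite /d /a; ring.
  have := sq2 (a - 1) d; lra.
- right.
  have e1 : (a + 1) ^+ 2 <= 20 * M ^+ 2 * e.
    apply: le_trans hsq.
    have h : 0 <= (a + 1) ^+ 2 * (a ^+ 2 - 2 * a) by apply: mulr_ge0 => //; nra.
    have -> : (a ^+ 2 - 1) ^+ 2 = (a + 1) ^+ 2 + (a + 1) ^+ 2 * (a ^+ 2 - 2 * a) by ring.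
    lra.
  have -> : q00 + p00 = p00 * (a + 1) + p01 * n10.
    transitivity (q00 * (p00 * p11 - p01 * p10) + p00); first by rewrite hP mulr1.
    by rewrite /a /n00 /n10; ring.
  have -> : q01 + p01 = p00 * n01 + p01 * (n11 + 1).
    transitivity (q01 * (p00 * p11 - p01 * p10) + p01); first by rewrite hP mulr1.
    by rewrite /n01 /n11; ring.
  have -> : q10 + p10 = p10 * (a + 1) + p11 * n10.
    transitivity (q10 * (p00 * p11 - p01 * p10) + p10); first by rewrite hP mulr1.
    by rewrite /a /n00 /n10; ring.
  have -> : q11 + p11 = p10 * n01 + p11 * (n11 + 1).
    transitivity (q11 * (p00 * p11 - p01 * p10) + p11); first by rewrite hP mulr1.
    by rewrite /n01 /n11; ring.
  apply: fPX.
  have -> : n11 + 1 = (a + 1) + d by rewrite /d /a; ring.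
  have := sq2 (a + 1) d; lra.
Qed.

End Alg.
Lemma sq_le_abs (R : realType) (u v : R) : 0 <= u -> u <= `|v| -> u ^+ 2 <= v ^+ 2.
Proof.
move=> u0 uv; rewrite -[v ^+ 2]real_normK ?num_real //.
have := normr_ge0 v; move: (`|v|) uv => w g1 g2; nra.
Qed.

Lemma sq_lt_help (R : realType) (x y : R) : 0 <= y -> x ^+ 2 < y ^+ 2 -> x < y.
Proof. move=> y0 h; case: (ltrP x 0) => hx; first lra. nra. Qed.

Lemma pow_help (R : realType) (r : R) n : 0 < r -> r <= 1 ->
  (r / 32) ^+ n.+1 ^+ 2 < r ^+ n.+1 / 16.
Proof.
move=> r0 r1.
have a0 : 0 < r / 32 by apply: divr_gt0.
have a1 : r / 32 <= 1 by rewrite ler_pdivrMr //; lra.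
rewrite -exprM.
have h1 : (r / 32) ^+ (n.+1 * 2) <= (r / 32) ^+ n.+1.
  apply: ler_wiXn2l; rewrite ?ltW //; last by rewrite muln2 -addnn ltn_addr.
  by rewrite ltr_pdivrMr //; lra.
apply: le_lt_trans h1 _.
rewrite expr_div_n.
have h2 : 32 <= (32 : R) ^+ n.+1.
  rewrite exprS -[X in X <= _]mulr1 ler_wpM2l //.
  have h : (1:R) <= 32 by lra.
  exact: (exprn_ege1 n h).
have rn0 : 0 < r ^+ n.+1 by apply: exprn_gt0.
rewrite ltr_pdivrMr; last by apply: exprn_gt0.
move: h2 rn0; move: (r ^+ n.+1) ((32:R) ^+ n.+1) => u v g1 g2.
nra.
Qed.

Section Part1.
Variable R : realType.
Variable L : finType.
Variable A : L -> 'M[R]_2.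
Hypothesis hdet : forall i, \det (A i) != 0.
Variable J : set R.
Hypothesis hJ : J !=set0.
Variable c : R.
Hypothesis hc : 0 < c.
Hypothesis hsep : forall n (w1 w2 : n.+1.-tuple L), thead w1 != thead w2 ->
      c ^+ n.+1 < sup [set dP (phiw A w1 x) (phiw A w2 x) | x in J].

Let K := Kb A.
Let d := db A.
Definition rho1 := Num.min (c ^+ 2) 1 * d ^+ 2 / K.

Lemma K_gt0 : 0 < K.
Proof. have := Kb_ge1 A; rewrite /K; lra. Qed.

Lemma rho1_gt0 : 0 < rho1.
Proof.
rewrite /rho1; apply: divr_gt0; last exact: K_gt0.
apply: mulr_gt0; last by apply: exprn_gt0; exact: (db_gt0 hdet).
by rewrite /Num.min; case: ifP => _ //; apply: exprn_gt0.
Qed.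

Lemma rho1K : rho1 * K = Num.min (c ^+ 2) 1 * d ^+ 2.
Proof. by rewrite /rho1 divfK // gt_eqF // K_gt0. Qed.

Lemma min_le_c2 : Num.min (c ^+ 2) 1 <= c ^+ 2.
Proof. by rewrite /Num.min; case: ifP => // /negbT; rewrite -leNgt. Qed.

Lemma min_le_1 : Num.min (c ^+ 2) 1 <= 1.
Proof. by rewrite /Num.min; case: ifP => // /ltW. Qed.

Lemma min_ge0 : 0 <= Num.min (c ^+ 2) 1.
Proof. by rewrite /Num.min; case: ifP => _ //; apply: exprn_ge0; apply: ltW. Qed.

Lemma core1_distinct (s1 s2 : seq L) h1 h2 t1 t2 :
  s1 = h1 :: t1 -> s2 = h2 :: t2 -> size t1 = size t2 -> h1 != h2 ->
  rho1 ^+ size s1 / 8 <= fr (Aws A s1 - Aws A s2).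
Proof.
move=> e1 e2 hs hh.
set m := size s1.
have hs1 : size s1 == (size t1).+1 by rewrite e1.
have hs2 : size s2 == (size t1).+1 by rewrite e2 /= hs.
pose w1 := Tuple hs1; pose w2 := Tuple hs2.
have hth : thead w1 != thead w2.
  by rewrite /thead (tnth_nth h1) (tnth_nth h1) /= e1 e2.
have := hsep hth.
set S := [set dP _ _ | x in J].
have S0 : S !=set0 by case: hJ => x Jx; exists (dP (phiw A w1 x) (phiw A w2 x)); exists x.
move=> /(sup_gt S0) [_ [x Jx <-] hlt].
have {}hlt : c ^+ (size t1).+1 < dP (phis A s1 x) (phis A s2 x) := hlt.
rewrite (_ : (size t1).+1 = m) in hlt; last by rewrite /m e1.
have hx := pair_id hdet s1 s2 x.
move: hx.
set P := Aws A s1; set Q := Aws A s2.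
set p0 := P i0 i0 * cos x + P i0 i1 * sin x.
set p1 := P i1 i0 * cos x + P i1 i1 * sin x.
set q0 := Q i0 i0 * cos x + Q i0 i1 * sin x.
set q1 := Q i1 i0 * cos x + Q i1 i1 * sin x.
set S2 := sin (phis A s1 x - phis A s2 x) ^+ 2.
move=> hid.
have hcs := cos2Dsin2 x.
have hcr := cross_le p0 p1 q0 q1.
have hnd := frB_vec P Q hcs; rewrite -/p0 -/p1 -/q0 -/q1 in hnd.
have hdP := det_le_vec P hcs; rewrite -/p0 -/p1 in hdP.
have hdQ := det_le_vec Q hcs; rewrite -/q0 -/q1 in hdQ.
have hfrP := fr_Aws A s1; have hfrQ := fr_Aws A s2.
rewrite -/P in hfrP; rewrite -/Q in hfrQ.
have hdetP := det_Aws hdet s1; have hdetQ := det_Aws hdet s2.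
rewrite -/P in hdetP; rewrite -/Q in hdetQ.
have hsz : size s2 = m by rewrite /m e1 e2 /= hs.
rewrite hsz -/m in hfrQ hdetQ.
rewrite -/m in hfrP hdetP.
have dm0 : 0 < d ^+ m by apply: exprn_gt0; exact: (db_gt0 hdet).
have Km0 : 0 < K ^+ m by apply: exprn_gt0; exact: K_gt0.
have cm0 : 0 < c ^+ m by apply: exprn_gt0.
have hd2 := dP_le (phis A s1 x) (phis A s2 x).
have hS : c ^+ m ^+ 2 < 4 * S2.
  have hz : S2 = `|sin (phis A s1 x - phis A s2 x)| ^+ 2 by rewrite /S2 real_normK // num_real.
  rewrite hz; move: hd2 hlt (normr_ge0 (sin (phis A s1 x - phis A s2 x))) (ltW cm0).
  set y := dP _ _; set z := `|sin _|; move: (c ^+ m) => cc g1 g2 g3 g4; nra.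
set np := p0 ^+ 2 + p1 ^+ 2.
set nq := q0 ^+ 2 + q1 ^+ 2.
set nd := (q0 - p0) ^+ 2 + (q1 - p1) ^+ 2.
have sq_le (u v : R) : 0 <= u -> u <= `|v| -> u ^+ 2 <= v ^+ 2.
  move=> u0 uv; rewrite -[v ^+ 2]real_normK ?num_real //.
  have := normr_ge0 v; move: (`|v|) uv => w g1 g2; nra.
have dP2 : d ^+ m ^+ 2 <= \det P ^+ 2 by apply: sq_le; [exact: ltW|].
have dQ2 : d ^+ m ^+ 2 <= \det Q ^+ 2 by apply: sq_le; [exact: ltW|].
have np_ge0 : 0 <= np by rewrite addr_ge0 ?sqr_ge0.
have nq_ge0 : 0 <= nq by rewrite addr_ge0 ?sqr_ge0.
have S2_ge0 : 0 <= S2 by rewrite sqr_ge0.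
have np0 : 0 < np.
  have h : 0 < np * fr P.
    apply: lt_le_trans hdP; apply: lt_le_trans dP2; exact: exprn_gt0.
  move: h (fr_ge0 P) np_ge0; move: (fr P) => F g1 g2 g3; nra.
have hX : S2 * nq <= nd.
  have h : np * (S2 * nq) <= np * nd by rewrite mulrA [np * S2]mulrC hid.
  by rewrite ler_pM2l in h.
have G0 := fr_ge0 (Q - P).
have F0 := fr_ge0 Q.
have key : c ^+ m ^+ 2 * d ^+ m ^+ 2 < 8 * K ^+ m * fr (Q - P).
  have D0 : 0 < d ^+ m ^+ 2 by apply: exprn_gt0.
  have st1 : c ^+ m ^+ 2 * d ^+ m ^+ 2 < 4 * S2 * d ^+ m ^+ 2.
    by rewrite ltr_pM2r.
  apply: lt_le_trans st1 _.
  have st2 : 4 * S2 * d ^+ m ^+ 2 <= 4 * S2 * (nq * fr Q).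
    apply: ler_wpM2l; first by apply: mulr_ge0.
    exact: le_trans dQ2 hdQ.
  apply: le_trans st2 _.
  have st3 : 4 * S2 * (nq * fr Q) <= 4 * nd * fr Q.
    rewrite mulrA -(mulrA 4) ler_wpM2r //; apply: ler_wpM2l => //.
  apply: le_trans st3 _.
  have st4 : nd <= fr (Q - P) by [].
  move: st4 hfrQ; move: (fr (Q - P)) (fr Q) (K ^+ m) G0 F0 => g f k g1 f1 g2 g3.
  have nd0 : 0 <= nd by rewrite addr_ge0 ?sqr_ge0.
  nra.
have hr : rho1 ^+ m * K ^+ m <= c ^+ m ^+ 2 * d ^+ m ^+ 2.
  rewrite -exprMn rho1K [c ^+ m ^+ 2]exprAC [d ^+ m ^+ 2]exprAC -exprMn.
  apply: lerXn2r; rewrite ?nnegrE.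
  - by apply: mulr_ge0; [exact: min_ge0|exact: sqr_ge0].
  - by apply: mulr_ge0; exact: sqr_ge0.
  - by apply: ler_wpM2r; [exact: sqr_ge0|exact: min_le_c2].
rewrite frB.
have h8 : rho1 ^+ m * K ^+ m < 8 * fr (Q - P) * K ^+ m.
  by apply: le_lt_trans hr _; rewrite [8 * _ * _]mulrAC; exact: key.
rewrite ltr_pM2r // in h8.
rewrite ler_pdivrMr //; lra.
Qed.

Lemma core1 (s1 s2 : seq L) : size s1 = size s2 -> s1 != s2 ->
  rho1 ^+ size s1 / 8 <= fr (Aws A s1 - Aws A s2).
Proof.
elim: s1 s2 => [|h1 t1 IH] [|h2 t2] //=.
move=> [hs] hne.
  case: (eqVneq h1 h2) => [eh|hh]; last exact: (@core1_distinct (h1 :: t1) (h2 :: t2) h1 h2 t1 t2).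
  rewrite -eh in hne *.
  have ht : t1 != t2 by move: hne; rewrite eqseq_cons eqxx.
  have IHt := IH t2 hs ht.
  rewrite !Aws_cons -mulrBr -mulmxE.
  set X := Aws A t1 - Aws A t2 in IHt *.
  have hfd := fr_det_mul (A h1) X.
  have hdl := db_le A h1.
  have hd0 := db_gt0 hdet.
  have hfa := fr_A_le A h1.
  have hK := K_gt0.
  have hX0 := fr_ge0 X.
  have hAX0 := fr_ge0 (A h1 *m X).
  have d2 : d ^+ 2 <= \det (A h1) ^+ 2.
    by apply: sq_le_abs => //; exact: ltW.
  have hrK : rho1 * K <= d ^+ 2.
    rewrite rho1K; have := min_le_1; have := min_ge0; have := sqr_ge0 d; nra.
  have hr0 := rho1_gt0.
  have hrn : 0 <= rho1 ^+ size t1 / 8 by apply: divr_ge0 => //; apply: exprn_ge0; exact: ltW.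
  rewrite exprS -mulrA.
  have h1' : K * (rho1 * (rho1 ^+ size t1 / 8)) <= K * fr (A h1 *m X).
    have e : K * (rho1 * (rho1 ^+ size t1 / 8)) = (rho1 * K) * (rho1 ^+ size t1 / 8) by ring.
    rewrite e.
    apply: le_trans (_ : d ^+ 2 * fr X <= _).
      by apply: ler_pM => //; apply: mulr_ge0 => //; exact: ltW.
    apply: le_trans (_ : \det (A h1) ^+ 2 * fr X <= _).
      by apply: ler_wpM2r.
    apply: le_trans hfd _.
    by apply: ler_wpM2r.
  by rewrite ler_pM2l in h1'.
Qed.

Lemma part1_dioph : strongly_diophantine A.
Proof.
exists (rho1 / 32); split; first by apply: divr_gt0 => //; exact: rho1_gt0.
move=> n w1 w2 hne.
case: n w1 w2 hne => [|n] w1 w2 hne.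
  by move: hne; rewrite (tuple0 w1) (tuple0 w2) eqxx.
have hv : val w1 != val w2 by [].
have hs : size w1 = size w2 by rewrite !size_tuple.
have hc1 := core1 hs hv.
rewrite size_tuple in hc1.
have hfo := fr_le_opnorm (Aws A w1 - Aws A w2).
have ho0 := opnorm_ge0 (Aws A w1 - Aws A w2).
rewrite /Aw -/(Aws A w1) -/(Aws A w2).
have hr0 := rho1_gt0.
have hr1 : rho1 <= 1.
  rewrite /rho1 ler_pdivrMr ?K_gt0 // mul1r.
  have := min_le_1; have := min_ge0; have := db_le1 A; have := (db_gt0 hdet); have := Kb_ge1 A.
  rewrite -/K -/d => g1 g2 g3 g4 g5.
  have : d ^+ 2 <= 1 by rewrite -(expr1n _ 2); apply: lerXn2r; rewrite ?nnegrE //; exact: ltW.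
  nra.
apply: (@sq_lt_help _ _ _ ho0).
apply: (@lt_le_trans _ _ (rho1 ^+ n.+1 / 16)).
  exact: pow_help.
move: hc1 hfo; move: (opnorm _) (fr _) => o f; lra.
Qed.

End Part1.
Lemma pow_help2 (R : realType) (r g : R) n : 0 < r -> r <= 1 -> 1 <= g ->
  (r / (2 * g)) ^+ n.+1 ^+ 2 < r ^+ n.+1 / g.
Proof.
move=> r0 r1 g1.
have g0 : 0 < g by lra.
have a0 : 0 < r / (2 * g) by apply: divr_gt0 => //; lra.
have a1 : r / (2 * g) < 1 by rewrite ltr_pdivrMr; lra.
rewrite -exprM.
have h1 : (r / (2 * g)) ^+ (n.+1 * 2) <= (r / (2 * g)) ^+ n.+1.
  apply: ler_wiXn2l; rewrite ?ltW //; last by rewrite muln2 -addnn ltn_addr.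
apply: le_lt_trans h1 _.
rewrite expr_div_n.
have h2 : 2 * g <= (2 * g) ^+ n.+1.
  have h : (1:R) <= 2 * g by lra.
  have h' := exprn_ege1 n h.
  rewrite exprS; move: h'; move: ((2 * g) ^+ n) => v hv; nra.
have rn0 : 0 < r ^+ n.+1 by apply: exprn_gt0.
rewrite ltr_pdivrMr; last by apply: exprn_gt0; lra.
move: h2 rn0; move: (r ^+ n.+1) ((2 * g) ^+ n.+1) => u v k1 k2.
have e : u / g * (2 * g) = 2 * u by field; lra.
have : u / g * (2 * g) <= u / g * v.
  by apply: ler_wpM2l => //; apply: divr_ge0; lra.
lra.
Qed.

Section Part2.
Variable R : realType.
Variable L : finType.
Variable A : L -> 'M[R]_2.
Hypothesis hdet1 : forall i, \det (A i) = 1.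
Variable c : R.
Hypothesis hc : 0 < c.
Hypothesis hc1 : c <= 1.
Hypothesis hdio : forall n (w1 w2 : n.-tuple L), w1 != w2 ->
      c ^+ n < opnorm (Aw A w1 - Aw A w2).

Lemma hdet2 i : \det (A i) != 0.
Proof. by rewrite hdet1 oner_neq0. Qed.

Lemma det_Aws1 s : \det (Aws A s) = 1.
Proof.
elim: s => [|k s IH]; first by rewrite Aws_nil det1.
by rewrite Aws_cons detM IH hdet1 mulr1.
Qed.

Lemma dio_seq s1 s2 : size s1 = size s2 -> s1 != s2 ->
  c ^+ size s1 ^+ 2 < fr (Aws A s1 - Aws A s2).
Proof.
move=> hs hne.
have h1 : size s1 == size s1 := eqxx _.
have h2 : size s2 == size s1 by rewrite hs.
have hw : Tuple h1 != Tuple h2.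
  by apply/negP => /eqP /(congr1 val) /= e; rewrite e eqxx in hne.
have := hdio hw.
rewrite (_ : Aw A (Tuple h1) = Aws A s1) // (_ : Aw A (Tuple h2) = Aws A s2) //.
have ho0 := opnorm_ge0 (Aws A s1 - Aws A s2).
have := opnorm_sq_le (Aws A s1 - Aws A s2).
have cn0 : 0 < c ^+ size s1 by apply: exprn_gt0.
move: (opnorm _) (fr _) ho0 cn0 => o f g1 g2 g3 g4; nra.
Qed.

Let K := Kb A.

Definition crs (P Q : 'M[R]_2) t :=
  (P i1 i0 * cos t + P i1 i1 * sin t) * (Q i0 i0 * cos t + Q i0 i1 * sin t) -
  (P i0 i0 * cos t + P i0 i1 * sin t) * (Q i1 i0 * cos t + Q i1 i1 * sin t).

Lemma cross_bound s1 s2 t (B : R) : 0 <= B ->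
  dP (phis A s1 t) (phis A s2 t) <= B ->
  crs (Aws A s1) (Aws A s2) t ^+ 2 <= B ^+ 2 * (fr (Aws A s1) * fr (Aws A s2)).
Proof.
move=> B0 hB.
have hid := pair_id hdet2 s1 s2 t; cbv zeta in hid.
rewrite /crs -hid.
have hs : sin (phis A s1 t - phis A s2 t) ^+ 2 <= B ^+ 2.
  rewrite -[sin _ ^+ 2]real_normK ?num_real //.
  apply: lerXn2r; rewrite ?nnegrE ?normr_ge0 //.
  exact: le_trans (dP_ge _ _) hB.
have hnp := fr_vec (Aws A s1) (cos2Dsin2 t).
have hnq := fr_vec (Aws A s2) (cos2Dsin2 t).
rewrite -mulrA; apply: ler_pM; rewrite ?sqr_ge0 ?mulr_ge0 ?addr_ge0 ?sqr_ge0 //.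
by apply: ler_pM; rewrite ?addr_ge0 ?sqr_ge0.
Qed.

Lemma core2 s1 s2 (B : R) : size s1 = size s2 -> s1 != s2 -> 0 <= B ->
  dP (phis A s1 0) (phis A s2 0) <= B ->
  dP (phis A s1 (pi/2)) (phis A s2 (pi/2)) <= B ->
  dP (phis A s1 (pi/4)) (phis A s2 (pi/4)) <= B ->
  (c ^+ 4 / K ^+ 6) ^+ size s1 / (1280 * 64) <= B ^+ 2.
Proof.
move=> hs hne B0 hB0 hB1 hB2.
have cb0 := cross_bound B0 hB0.
have cb1 := cross_bound B0 hB1.
have cb2 := cross_bound B0 hB2.
have lowD := dio_seq hs hne.
have hs' : size (s1 ++ s1) = size (s2 ++ s2) by rewrite !size_cat hs.
have hne' : s1 ++ s1 != s2 ++ s2.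
  apply/negP => /eqP e; have := congr1 (take (size s1)) e.
  by rewrite !take_size_cat // => e'; rewrite e' eqxx in hne.
have lowS := dio_seq hs' hne'.
rewrite !Aws_cat size_cat exprD in lowS.
have hfP := fr_Aws A s1; have hfQ := fr_Aws A s2.
rewrite -hs in hfQ.
move: lowD lowS hfP hfQ cb0 cb1 cb2.
set n := size s1.
set P := Aws A s1; set Q := Aws A s2.
rewrite -/K.
move=> lowD lowS hfP hfQ cb0 cb1 cb2.
have hK1 : 1 <= K := Kb_ge1 A.
set k := K ^+ n.
have k1 : 1 <= k by apply: exprn_ege1.
set M := 2 * k.
have hM : 1 <= M by rewrite /M; lra.
have hM0 : 0 <= M by lra.
have frPQ : fr P * fr Q <= M ^+ 2.
  by rewrite expr2; apply: ler_pM; rewrite ?fr_ge0.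
have hB2' : 0 <= B ^+ 2 := sqr_ge0 B.
have cbM (t : R) : crs P Q t ^+ 2 <= B ^+ 2 * (fr P * fr Q) -> crs P Q t ^+ 2 <= B ^+ 2 * M ^+ 2.
  by move=> h; apply: le_trans h _; apply: ler_wpM2l.
set e := 4 * M ^+ 2 * B ^+ 2.
have e0 : 0 <= e by rewrite /e; apply: mulr_ge0 => //; apply: mulr_ge0 => //; apply: sqr_ge0.
have Be : B ^+ 2 * M ^+ 2 <= e.
  rewrite /e; have := mulr_ge0 hB2' (sqr_ge0 M); lra.
have hk0 : (P i1 i0 * Q i0 i0 - P i0 i0 * Q i1 i0) ^+ 2 <= e.
  have -> : P i1 i0 * Q i0 i0 - P i0 i0 * Q i1 i0 = crs P Q 0 by rewrite /crs cos0 sin0; ring.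
  exact: le_trans (cbM _ cb0) Be.
have hk1 : (P i1 i1 * Q i0 i1 - P i0 i1 * Q i1 i1) ^+ 2 <= e.
  have -> : P i1 i1 * Q i0 i1 - P i0 i1 * Q i1 i1 = crs P Q (pi/2) by rewrite /crs cos_pihalf sin_pihalf; ring.
  exact: le_trans (cbM _ cb1) Be.
have hk2 : ((P i1 i0 + P i1 i1) * (Q i0 i0 + Q i0 i1) - (P i0 i0 + P i0 i1) * (Q i1 i0 + Q i1 i1)) ^+ 2 <= e.
  have -> : (P i1 i0 + P i1 i1) * (Q i0 i0 + Q i0 i1) - (P i0 i0 + P i0 i1) * (Q i1 i0 + Q i1 i1)
      = 2 * crs P Q (pi/4).
    rewrite /crs sin_pi4.
    have hs2 := @cos_pi4_sq R.
    move: (cos (pi / 4)) hs2 => s hs2.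
    transitivity (2 * s ^+ 2 * ((P i1 i0 + P i1 i1) * (Q i0 i0 + Q i0 i1) - (P i0 i0 + P i0 i1) * (Q i1 i0 + Q i1 i1))).
      by rewrite hs2; field.
    ring.
  rewrite exprMn; have := cbM _ cb2; rewrite /e.
  move: (crs P Q (pi / 4) ^+ 2) => z hz; lra.
have hPd := det_Aws1 s1; have hQd := det_Aws1 s2.
rewrite -/P in hPd; rewrite -/Q in hQd.
have hA := alg_core hPd hQd hfP hfQ hM e0 hk0 hk1 hk2.
have hPPQQ : fr (P * P - Q * Q) <= 4 * M * fr (Q + P).
  have -> : P * P - Q * Q = P * (P + Q) - (P + Q) * Q.
    by rewrite mulrDr mulrDl opprD addrA addrK.
  apply: le_trans (frBm_le _ _) _.
  have h1 : fr (P * (P + Q)) <= fr P * fr (P + Q) := fr_mul P (P + Q).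
  have h2 : fr ((P + Q) * Q) <= fr (P + Q) * fr Q := fr_mul (P + Q) Q.
  rewrite (addrC P Q) in h1 h2 *.
  have f0 := fr_ge0 (Q + P).
  have h1' := le_trans h1 (ler_wpM2r f0 hfP).
  have h2' := le_trans h2 (ler_wpM2l f0 hfQ).
  move: h1' h2'; move: (fr (Q + P)) => f g1 g2; rewrite /M /k; lra.
rewrite frB in lowD.
set u := c ^+ n.
have u0 : 0 < u by apply: exprn_gt0.
have u1 : u <= 1 by apply: exprn_ile1 => //; exact: ltW.
set W := M ^+ 5 * B ^+ 2.
have W0 : 0 <= W by apply: mulr_ge0 => //; apply: exprn_ge0.
have key : u ^+ 4 <= 1280 * M * W.
  have u4 : u ^+ 4 <= u ^+ 2.
    have := sqr_ge0 u; have : u ^+ 2 <= 1 by rewrite -(expr1n _ 2); apply: lerXn2r; rewrite ?nnegrE //; exact: ltW.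
    rewrite (_ : u ^+ 4 = u ^+ 2 * u ^+ 2); last by rewrite -exprD.
    move: (u ^+ 2) => v g1 g2; nra.
  case: hA => hA.
  - have : u ^+ 2 < 320 * W.
      apply: lt_le_trans lowD _; apply: le_trans hA _.
      apply: eqle; rewrite /W /e /M /k; ring.
    have : 320 * W <= 1280 * M * W.
      have := mulr_ge0 (subr_ge0_hint hM) W0; lra.
    lra.
  - have h : (u * u) ^+ 2 < 4 * M * fr (Q + P) := lt_le_trans lowS hPPQQ.
    have h' : 4 * M * fr (Q + P) <= 4 * M * (80 * M ^+ 3 * e).
      by apply: ler_wpM2l => //; lra.
    have e' : 4 * M * (80 * M ^+ 3 * e) = 1280 * M * W by rewrite /W /e /M /k; ring.
    rewrite -e' (_ : u ^+ 4 = (u * u) ^+ 2); last by rewrite exprMn -exprD.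
    exact: ltW (lt_le_trans h h').
rewrite expr_div_n [(c ^+ 4) ^+ n]exprAC [(K ^+ 6) ^+ n]exprAC -/u -/k.
have k6 : 0 < k ^+ 6 by apply: exprn_gt0; lra.
have g0 : (0:R) < 1280 * 64 by lra.
rewrite ler_pdivrMr; last exact: g0.
rewrite ler_pdivrMr; last exact: k6.
apply: le_trans key _; apply: eqle; rewrite /W /M; ring.
Qed.

Definition rho2 := c ^+ 4 / K ^+ 6.

Lemma rho2_gt0 : 0 < rho2.
Proof.
have hK1 : 1 <= K := Kb_ge1 A.
by rewrite /rho2 divr_gt0 // exprn_gt0 //; lra.
Qed.

Lemma rho2_le1 : rho2 <= 1.
Proof.
have hK1 : 1 <= K := Kb_ge1 A.
have k6 : 1 <= K ^+ 6 by apply: exprn_ege1.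
have c4 : c ^+ 4 <= 1 by apply: exprn_ile1 => //; exact: ltW.
rewrite /rho2 ler_pdivrMr; last by lra.
lra.
Qed.

Lemma part2_sep : strong_exp_sep A setT.
Proof.
have g0 : (0:R) < 1280 * 64 by lra.
have r0 := rho2_gt0.
split.
  move=> n w1 w2 hsm; apply/eqP; apply: contraT => hne.
  have hv : val w1 != val w2 by [].
  have hs : size w1 = size w2 by rewrite !size_tuple.
  have z t : dP (phis A w1 t) (phis A w2 t) <= 0 by rewrite (hsm t).
  have := core2 hs hv (lexx 0) (z 0) (z (pi/2)) (z (pi/4)).
  rewrite expr0n /= -/rho2 => h.
  have : 0 < rho2 ^+ size w1 / (1280 * 64).
    by apply: divr_gt0; [apply: exprn_gt0; exact: r0 | exact: g0].
  lra.
exists (rho2 / (2 * (1280 * 64))); split.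
  by apply: divr_gt0; [exact: r0 | lra].
move=> n w1 w2 hh.
have hv : val w1 != val w2.
  by apply/negP => /eqP e; move: hh; rewrite (val_inj e) eqxx.
have hs : size w1 = size w2 by rewrite !size_tuple.
set S := sup _.
have hub : has_ubound [set dP (phiw A w1 x) (phiw A w2 x) | x in [set: R]].
  by exists 2 => _ [x _ <-]; exact: dP_le2.
have hS t : dP (phis A w1 t) (phis A w2 t) <= S.
  by apply: ub_le_sup => //; exists t.
have S0 : 0 <= S := le_trans (dP_ge0 _ _) (hS 0).
have := core2 hs hv S0 (hS 0) (hS (pi/2)) (hS (pi/4)).
rewrite size_tuple -/rho2 => h.
apply: sq_lt_help; first exact: S0.
apply: lt_le_trans h.
apply: pow_help2; [exact: r0 | exact: rho2_le1 | lra].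
Qed.

End Part2.
Lemma dP_neq0 (R : realType) (x y : R) : sin (x - y) != 0 -> dP x y != 0.
Proof.
move=> h; have := dP_ge x y; rewrite -normr_gt0 in h.
move=> h'; apply/negP => /eqP e; rewrite e in h'; lra.
Qed.

Lemma min_c1 (R : realType) (c : R) : 0 < c ->
  0 < Num.min c 1 /\ Num.min c 1 <= 1 /\ Num.min c 1 <= c.
Proof. move=> h; rewrite /Num.min; case: ifP => h1; split; try split; lra. Qed.

Unset Implicit Arguments.

Theorem lemma3p6 (R : realType) :
  (forall (L : finType) (A : L -> 'M[R]_2),
     (forall i, A i \in unitmx) ->
     (exists J : set R, J !=set0 /\ strong_exp_sep A J) ->
     strongly_diophantine A) /\
  (forall (L : finType) (A : L -> 'M[R]_2),
     (forall i, \det (A i) = 1) ->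
     ((exists J : set R, three_points J /\ strong_exp_sep A J) <->
      strongly_diophantine A)).
Proof.
split.
  move=> L A hA [J [hJ [_ [c [hc hsep]]]]].
  have hdet i : \det (A i) != 0 by rewrite -unitfE -unitmxE.
  exact: (part1_dioph hdet hJ hc hsep).
move=> L A hA.
have hdet i : \det (A i) != 0 by rewrite hA oner_neq0.
split.
  move=> [J [[x [y [z [[Jx _ _] _]]]] [_ [c [hc hsep]]]]].
  have hJ : J !=set0 by exists x.
  exact: (part1_dioph hdet hJ hc hsep).
move=> [c [hc hdio]].
have [m0 [m1 m2]] := min_c1 hc.
have hdio1 n (w1 w2 : n.-tuple L) : w1 != w2 ->
    Num.min c 1 ^+ n < opnorm (Aw A w1 - Aw A w2).
  move=> hne; apply: le_lt_trans (hdio n w1 w2 hne).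
  by apply: lerXn2r; rewrite ?nnegrE; [exact: ltW | exact: ltW | exact: m2].
exists setT; split; last exact: (part2_sep hA m0 m1 hdio1).
have pg := @pi_gt0 R.
have s4 : 0 < sin (pi / 4 : R) by rewrite sin_pi4; exact: cos_pi4_gt0.
exists 0, (pi / 4), (pi / 2); split; first by [].
split; apply: dP_neq0.
- by rewrite sub0r sinN oppr_eq0 gt_eqF.
- have -> : (pi / 4 - pi / 2 : R) = pi / 4 - pi / 2 by [].
  by rewrite sinBpihalf oppr_eq0 gt_eqF // cos_pi4_gt0.
- by rewrite sub0r sinN sin_pihalf oppr_eq0 oner_neq0.
Qed.
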